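(* Let $k\ge 2$, $N\ge 2$. Then $$\det(\lambda I-\widetilde H)=\frac{1}{k!}\sum_{j=0}^{k-1}|s(k,k-j)|\prod_{\substack{i=0\\ i\ne j}}^{k-1}\bigl(\lambda-N^{k-i}\bigr),$$ equivalently $$\frac{\det(\lambda I-\widetilde H)}{\det(\lambda I-H)}=\sum_{j=0}^{k-1}\frac{|s(k,k-j)|/k!}{\lambda-N^{k-j}}.$$
   Context: $H[c,c'] = \#\{(d_1,\ldots,d_k)\in\{0,\ldots,N-1\}^k : \lfloor (d_1+\cdots+d_k+c)/N\rfloor = c'\}$ for $c,c'\in\{0,\ldots,k-1\}$ (count matrix of the carry chain of $k$-summand base-$N$ addition); $\widetilde H$ is its leading $(k-1)\times(k-1)$ principal submatrix (indices $0,\ldots,k-2$). $|s(k,m)|$ is the unsigned Stirling number of the first kind, the coefficient of $x^m$ in $x(x+1)\cdots(x+k-1)$. *)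

(* Defs.v *)
From HB Require Import structures.
From mathcomp Require Import all_boot all_order all_algebra.
Set Implicit Arguments. Unset Strict Implicit. Unset Printing Implicit Defensive.
Import GRing.Theory Num.Theory.
Local Open Scope ring_scope.

Definition carry_count (k N c c' : nat) : nat :=
  #|[set d : {ffun 'I_k -> 'I_N} |
      ((\sum_(i < k) (nat_of_ord (d i)) + c) %/ N)%N == c']|.

Definition carryH (k N : nat) : 'M[rat]_k :=
  \matrix_(i < k, j < k) (carry_count k N i j)%:R.

Definition carryHt (k N : nat) : 'M[rat]_(k.-1) :=
  \matrix_(i < k.-1, j < k.-1) (carry_count k N i j)%:R.

Definition stirling1u (k m : nat) : rat :=
  (\prod_(i < k) ('X + (i%:R)%:P) : {poly rat})`_m.

(* Main.v *)
Require Import Defs.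
From mathcomp Require Import all_boot all_order all_algebra.
From mathcomp Require Import zify ring.
Set Implicit Arguments. Unset Strict Implicit. Unset Printing Implicit Defensive.
Import Order.TTheory GRing.Theory Num.Theory.
Local Open Scope ring_scope.

Section Comb.
Local Open Scope nat_scope.
Variable N : nat.
Hypothesis N0 : (0 < N)%N.

Definition ext k (a : 'I_N) (d : {ffun 'I_k -> 'I_N}) : {ffun 'I_k.+1 -> 'I_N} :=
  [ffun i : 'I_k.+1 => if unlift ord0 i is Some j then d j else a].

Lemma sumdS k (F : nat -> nat) :
  (\sum_(d : {ffun 'I_k.+1 -> 'I_N}) F (\sum_i (d i : nat)))%N =
  (\sum_(a < N) \sum_(d : {ffun 'I_k -> 'I_N}) F (a + \sum_i (d i : nat)))%N.
Proof.
rewrite pair_bigA /=.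
rewrite (reindex (fun p : 'I_N * {ffun 'I_k -> 'I_N} => ext p.1 p.2)) /=.
  apply: eq_bigr => [[a d]] _ /=; congr F.
  rewrite big_ord_recl /ext !ffunE unlift_none; congr addn.
  by apply: eq_bigr => i _; rewrite ffunE liftK.
exists (fun d : {ffun 'I_k.+1 -> 'I_N} => (d ord0, [ffun j => d (lift ord0 j)])) => [[a d]|d] _ /=.
  rewrite /ext ffunE unlift_none; congr pair; apply/ffunP => j; by rewrite !ffunE liftK.
apply/ffunP => i; rewrite /ext ffunE; case: unliftP => [j ->|->]; by rewrite ?ffunE.
Qed.

Lemma pick_one m (g : nat -> nat) :
  (\sum_(a < N) (N %| m + a + 1) * g ((m + a) %/ N))%N = g (m %/ N).
Proof.
have h2 := divn_eq m N; have h1 := ltn_pmod m N0.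
move: h1 h2; set q := m %/ N; set r := m %% N => h1 h2.
have lt : (N.-1 - r < N)%N by lia.
rewrite (bigD1 (Ordinal lt)) //= big1 ?addn0.
  have -> : (N %| m + (N.-1 - r) + 1) = true.
    apply/dvdnP; exists q.+1; lia.
  rewrite mul1n; congr g.
  have -> : m + (N.-1 - r) = q * N + N.-1 by lia.
  rewrite divnMDl // divn_small ?addn0 //; lia.
move=> a /eqP ha.
have -> : (N %| m + a + 1) = false; last by [].
apply/negP => /dvdnP [q' hq].
apply: ha; apply: val_inj => /=.
have ha : (a < N)%N by [].
have : (q' = q + 1)%N by nia.
nia.
Qed.

Lemma binS_bool (b : bool) x k : 'C(b + x, k.+1) = 'C(x, k.+1) + b * 'C(x, k).
Proof. by case: b; rewrite ?add1n ?add0n ?binS ?mul1n ?mul0n ?addn0. Qed.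

Lemma sum_lt k (d : {ffun 'I_k -> 'I_N}) : \sum_i (d i : nat) <= k * N.-1.
Proof.
rewrite -[k in k * _]card_ord -sum_nat_const; apply: leq_sum => i _.
by rewrite -ltnS prednK // ltn_ord.
Qed.

Lemma sum_binom k n :
  \sum_(d : {ffun 'I_k -> 'I_N}) 'C((\sum_i (d i : nat) + n) %/ N, k) = 'C(n, k).
Proof.
elim: k n => [|k IHk] n.
  under eq_bigr do rewrite bin0.
  by rewrite sum_nat_const card_ffun !card_ord expn0 bin0.
elim: n => [|n IHn].
  rewrite bin0n big1 // => d _; apply: bin_small.
  rewrite addn0 ltn_divLR //; have := sum_lt d.
  have e : forall j, j * N = j * N.-1 + j by move=> j; rewrite -mulnSr prednK.
  rewrite e; lia.
under eq_bigr do rewrite addnS divnS // binS_bool.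
rewrite big_split /= IHn; congr addn.
transitivity (\sum_(d : {ffun 'I_k -> 'I_N}) 'C((\sum_i (d i : nat) + n) %/ N, k)); last exact: IHk.
rewrite (@sumdS k (fun s => nat_of_bool (N %| (s + n).+1) * 'C((s + n) %/ N, k))).
rewrite exchange_big /=; apply: eq_bigr => d _.
rewrite -(pick_one (\sum_i (d i : nat) + n) (fun x => 'C(x, k))).
apply: eq_bigr => a _.
set s := (\sum_(i < k) _). have -> : (a + s + n).+1 = s + n + a + 1 by lia.
have -> : (a + s + n = s + n + a)%N by lia.
by [].
Qed.

Lemma carry_binom k c x : c < k ->
  \sum_(c' < k) carry_count k N c c' * 'C(x + c', k) = 'C(N * x + c, k).
Proof.
move=> ck.
rewrite -(sum_binom k (N * x + c)).
transitivity (\sum_(c' < k) \sum_(d : {ffun 'I_k -> 'I_N})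
   (((\sum_i (d i : nat) + c) %/ N == c') * 'C(x + c', k))).
  apply: eq_bigr => c' _; rewrite /carry_count -sum1_card big_distrl /=.
  rewrite big_mkcond /=; apply: eq_bigr => d _; rewrite inE; by case: eqP.
rewrite exchange_big /=; apply: eq_bigr => d _.
have lt : (\sum_i (d i : nat) + c) %/ N < k.
  rewrite ltn_divLR //; have := sum_lt d.
  have e : forall j, j * N = j * N.-1 + j by move=> j; rewrite -mulnSr prednK.
  rewrite e; lia.
have e : (\sum_i (d i : nat) + (N * x + c)) %/ N = x + (\sum_i (d i : nat) + c) %/ N.
  by rewrite addnCA mulnC divnMDl.
rewrite e (bigD1 (Ordinal lt)) //=.
rewrite eqxx /= mul1n [X in _ + X = _]big1 ?addn0 //.
move=> j hj; case: eqP => // e2; exfalso; move/eqP: hj; apply; apply: val_inj; by rewrite /= e2.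
Qed.
End Comb.

Definition binp k (q : {poly rat}) : {poly rat} :=
  (k`!%:R)^-1 *: \prod_(i < k) (q - (i%:R)%:P).

Lemma prod_nat_ffact m k : \prod_(i < k) (m%:R - i%:R : rat) = (m ^_ k)%:R.
Proof.
elim: k => [|k IH]; first by rewrite big_ord0 ffactn0.
rewrite big_ord_recr /= IH ffactnSr natrM.
case: (leqP k m) => km; first by rewrite natrB.
by rewrite ffact_small // !mul0r.
Qed.

Lemma binp_nat k q y m : q.[y] = m%:R -> (binp k q).[y] = 'C(m, k)%:R.
Proof.
move=> hq; rewrite /binp hornerZ horner_prod.
under eq_bigr do rewrite hornerD hornerN hornerC hq.
rewrite prod_nat_ffact -bin_ffact natrM mulrC mulfK //.
by rewrite pnatr_eq0 -lt0n fact_gt0.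
Qed.

Lemma poly_nat_zero (p : {poly rat}) : (forall x : nat, p.[x%:R] = 0) -> p = 0.
Proof.
move=> h; apply: (@roots_geq_poly_eq0 _ p [seq i%:R | i <- iota 0 (size p)]).
- by apply/allP => _ /mapP [i _ ->]; rewrite /root h.
- by rewrite map_inj_uniq ?iota_uniq // => a b /eqP; rewrite eqr_nat => /eqP.
- by rewrite size_map size_iota.
Qed.

Lemma coef_compZX (p : {poly rat}) (a : rat) t :
  (p \Po (a *: 'X))`_t = a ^+ t * p`_t.
Proof.
rewrite coef_comp_poly.
under eq_bigr do rewrite exprZn coefZ coefXn.
case: (ltnP t (size p)) => ht.
  rewrite (bigD1 (Ordinal ht)) //= eqxx mulr1 big1 ?addr0; first by rewrite mulrC.
  move=> i hi; case: eqP => e; last by rewrite mulr0 mulr0.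
  by exfalso; move/eqP: hi; apply; apply: val_inj.
rewrite big1 ?(nth_default 0 ht) ?mulr0 // => i _.
case: eqP => e; last by rewrite !mulr0.
by have := ltn_ord i; rewrite -e ltnNge ht.
Qed.

Lemma binp_comp k (a c : rat) :
  binp k (a *: 'X + c%:P) = binp k ('X + c%:P) \Po (a *: 'X).
Proof.
rewrite /binp comp_polyZ rmorph_prod /=; congr (_ *: _); apply: eq_bigr => i _.
by rewrite comp_polyB comp_polyD comp_polyX !comp_polyC.
Qed.

Section Poly.
Variables (k N : nat).
Hypothesis N0 : (0 < N)%N.

Lemma carry_poly c : (c < k)%N ->
  \sum_(c' < k) (carry_count k N c c')%:R *: binp k ('X + (c'%:R)%:P) =
  binp k (N%:R *: 'X + (c%:R)%:P).
Proof.
move=> ck; apply/eqP; rewrite -subr_eq0; apply/eqP; apply: poly_nat_zero => x.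
rewrite hornerD hornerN horner_sum.
rewrite (@binp_nat _ _ _ (N * x + c)%N); last first.
  by rewrite hornerD hornerZ hornerX hornerC natrD natrM.
under eq_bigr => c' _ do rewrite hornerZ (@binp_nat _ _ _ (x + c')%N) ?hornerD ?hornerX ?hornerC ?natrD //.
rewrite -(carry_binom N0 x ck) natr_sum.
by apply/eqP; rewrite subr_eq0; apply/eqP; apply: eq_bigr => i _; rewrite natrM.
Qed.
End Poly.

Definition Vm k : 'M[rat]_k :=
  \matrix_(c < k, j < k) (binp k ('X + ((c : nat)%:R)%:P))`_(k - j).

Lemma HV k N (N0 : (0 < N)%N) (c j : 'I_k) :
  \sum_c' carryH k N c c' * Vm k c' j = (N ^ (k - j))%:R * Vm k c j.
Proof.
under eq_bigr do rewrite !mxE.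
have := congr1 (fun p : {poly rat} => p`_(k - j)) (carry_poly N0 (ltn_ord c)).
rewrite /= binp_comp coef_compZX => h.
rewrite mxE natrX -h coef_sum; apply: eq_bigr => i _; by rewrite [RHS]coefZ.
Qed.

Lemma size_binpX k (c : nat) : (size (binp k ('X + (c%:R)%:P)) <= k.+1)%N.
Proof.
rewrite /binp (leq_trans (size_scale_leq _ _)) //.
have -> : \prod_(i < k) ('X + (c%:R)%:P - (i%:R)%:P) =
          \prod_(i < k) ('X - ((i%:R - c%:R : rat))%:P).
  by apply: eq_bigr => i _; rewrite polyCB opprB addrA addrAC.
by rewrite size_prod_XsubC [index_enum _]unlock -enumT size_enum_ord.
Qed.

Lemma V1 k (c : 'I_k) : \sum_j Vm k c j = ((c : nat).+1 == k)%:R.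
Proof.
set p := binp k ('X + ((c : nat)%:R)%:P).
under eq_bigr do rewrite mxE.
rewrite (reindex_inj rev_ord_inj) /=.
have e : forall j : 'I_k, (k - (k - j.+1) = j.+1)%N by move=> j; have := ltn_ord j; lia.
under eq_bigr do rewrite e.
have h1 : p.[1] = ('C((c : nat).+1, k))%:R.
  by apply: binp_nat; rewrite hornerD hornerX hornerC -add1n natrD.
have h0 : p.[0] = ('C(c, k))%:R.
  by apply: binp_nat; rewrite hornerD hornerX hornerC add0r.
rewrite (horner_coef_wide _ (size_binpX k c)) big_ord_recl /= in h1.
rewrite bin_small // horner_coef0 in h0.
move: h1; rewrite h0 expr0 mulr1 add0r.
under eq_bigr do rewrite expr1n mulr1.
move=> ->; case: (ltngtP c.+1 k) => h.
- by rewrite bin_small.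
- by have := ltn_ord c; lia.
- by rewrite h binn.
Qed.

Lemma stir_ge0 k t : 0 <= (\prod_(i < k) ('X + (i%:R)%:P) : {poly rat})`_t.
Proof.
elim: k t => [|k IH] t; first by rewrite big_ord0 coef1 ler0n.
rewrite big_ord_recr /= mulrDr coefD coefMX coefMC.
by apply: addr_ge0; [case: (t == 0)%N => //; exact: IH | apply: mulr_ge0; [exact: IH | exact: ler0n]].
Qed.

Lemma stir_gt0 k t : (t <= k)%N -> (0 < t)%N || (k == 0)%N ->
  0 < (\prod_(i < k) ('X + (i%:R)%:P) : {poly rat})`_t.
Proof.
elim: k t => [|k IH] t ht hk.
  have -> : t = 0%N by lia.
  by rewrite big_ord0 coef1 /= ltr01.
rewrite big_ord_recr /= mulrDr coefD coefMX coefMC.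
case: t ht hk => [//|t] ht _ /=.
case: (posnP t) => t0; last first.
  apply: (lt_le_trans (IH t _ _)); try lia.
  by rewrite lerDl mulr_ge0 ?stir_ge0 ?ler0n.
subst t; case: (posnP k) => k0.
  by subst k; rewrite big_ord0 coef1 /= mulr0 addr0.
apply: (@lt_le_trans _ _ (_ * k%:R) _ _ (mulr_gt0 (IH 1%N _ _) _)); try lia.
  by rewrite ltr0n.
by rewrite lerDr stir_ge0.
Qed.

Lemma Vlast n (j : 'I_n.+1) :
  Vm n.+1 ord_max j = ((n.+1)`!%:R)^-1 * stirling1u n.+1 (n.+1 - j).
Proof.
rewrite mxE /binp coefZ /stirling1u; congr (_ * _`_ _); congr polyseq.
rewrite [RHS](reindex_inj rev_ord_inj) /=; apply: eq_bigr => i _.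
have hi := ltn_ord i.
rewrite subSS natrB; last by lia.
rewrite polyCB; ring.
Qed.

Theorem mainTheorem10 (k N : nat) (hk : (2 <= k)%N) (hN : (2 <= N)%N) :
  char_poly (carryHt k N) =
  (k`!%:R : rat)^-1 *:
    \sum_(j < k) (stirling1u k (k - j) *:
       \prod_(i < k | i != j) ('X - ((N ^ (k - i))%:R)%:P)).
Proof.
case: k hk => [//|n] hk.
have N0 : (0 < N)%N by lia.
pose H := carryH n.+1 N.
pose M := char_poly_mx H.
pose V := Vm n.+1.
pose V' := map_mx (@polyC rat) V.
pose a (j : 'I_n.+1) : rat := (N ^ (n.+1 - j))%:R.
have MV : forall c j, (M *m V') c j = V' c j * ('X - (a j)%:P).
  move=> c j; rewrite /M /char_poly_mx mulmxBl mul_scalar_mx /V' -map_mxM !mxE.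
  rewrite /H /V HV // rmorphM /= mxE /a; ring.
have AV : forall r j, (\adj M *m V') r j * ('X - (a j)%:P) = char_poly H * (V r j)%:P.
  move=> r j.
  have e1 : (\adj M *m (M *m V')) r j = (\adj M *m V') r j * ('X - (a j)%:P).
    rewrite !mxE big_distrl /=; apply: eq_bigr => c _; by rewrite MV mulrA.
  by rewrite -e1 mulmxA mul_adj_mx mul_scalar_mx !mxE.
have Vn0 : forall j, V ord_max j != 0.
  move=> j; rewrite /V Vlast mulf_neq0 //.
    by rewrite invr_eq0 pnatr_eq0 -lt0n fact_gt0.
  apply: lt0r_neq0; apply: stir_gt0; have := ltn_ord j; lia.
have root_a : forall j, root (char_poly H) (a j).
  move=> j; have := congr1 (fun p => p.[a j]) (AV ord_max j).
  rewrite /= !hornerM hornerXsubC subrr mulr0 hornerC => /esym /eqP.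
  by rewrite mulf_eq0 (negbTE (Vn0 j)) orbF.
have Pchar : char_poly H = \prod_(j < n.+1) ('X - (a j)%:P).
  have sz : size (index_enum 'I_n.+1) = n.+1.
    by rewrite [index_enum _]unlock -enumT size_enum_ord.
  have := @all_roots_prod_XsubC _ (char_poly H) [seq a j | j <- index_enum 'I_n.+1].
  rewrite size_char_poly size_map sz => /(_ erefl).
  rewrite (monicP (char_poly_monic H)) scale1r big_map; apply.
    by apply/allP => _ /mapP [j _ ->]; exact: root_a.
  rewrite uniq_rootsE map_inj_uniq ?index_enum_uniq // => i j.
  rewrite /a => /eqP; rewrite eqr_nat => /eqP /(expnI hN) e.
  apply: val_inj => /=; have := ltn_ord i; have := ltn_ord j; lia.
have Wj : forall r j, (\adj M *m V') r j =
    (V r j)%:P * \prod_(i < n.+1 | i != j) ('X - (a i)%:P).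
  move=> r j; apply: (@mulIf _ ('X - (a j)%:P)); first by rewrite polyXsubC_eq0.
  rewrite AV Pchar (bigD1 j) //=; ring.
have cof : char_poly (carryHt n.+1 N) = \adj M ord_max ord_max.
  rewrite mxE /cofactor /= -signr_odd addnn odd_double expr0 mul1r /char_poly.
  congr (\det _); apply/matrixP => i j; rewrite !mxE !lift_max (inj_eq lift_inj).
  by [].
have sumW : \adj M ord_max ord_max = \sum_j (\adj M *m V') ord_max j.
  under [RHS]eq_bigr do rewrite mxE.
  rewrite exchange_big /=.
  rewrite (eq_bigr (fun c => \adj M ord_max c * ((c == ord_max)%:R)%:P)); last first.
    move=> c _; rewrite -big_distrr /=; congr (_ * _).
    under eq_bigr do rewrite mxE.
    rewrite -rmorph_sum /V V1; congr (_%:R)%:P.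
  rewrite (bigD1 ord_max) //= eqxx mulr1 big1 ?addr0 // => c /negbTE ->.
  by rewrite mulr0.
rewrite cof sumW scaler_sumr; apply: eq_bigr => j _.
by rewrite Wj /V Vlast polyCM -mulrA !mul_polyC scalerA.
Qed.
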